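(* Let $A$ be a finite abelian group, let $H$ be a subgroup of $A$, let $A_2$ be the Sylow $2$-subgroup of $A$ and $H_2$ the Sylow $2$-subgroup of $H$. If $\Gamma_{A,H}$ admits a perfect code, then $\Gamma_{A_2,H_2}$ admits a perfect code.
   Context: Abelian groups are written additively with identity $0$. For a subgroup $H$ of a finite abelian group $A$, the subgroup sum graph $\Gamma_{A,H}$ is the simple undirected graph with vertex set $A$ in which distinct vertices $x,y$ are adjacent if and only if $x+y\in H\setminus\{0\}$. A perfect code in a graph is a set $C$ of vertices that is independent and such that every vertex not in $C$ is adjacent to exactly one vertex of $C$. *)

(* Defs.v *)
From mathcomp Require Import all_boot all_fingroup all_solvable.
Set Implicit Arguments. Unset Strict Implicit. Unset Printing Implicit Defensive.
Local Open Scope group_scope.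

(* Groups are written multiplicatively (fingroup convention): the abelian
   group operation "+" of the paper is "*", and the identity 0 is 1. *)

Definition ssg_adj (gT : finGroupType) (H : {set gT}) (x y : gT) : bool :=
  (x != y) && (x * y \in H :\ 1).

Definition perfect_code (gT : finGroupType) (A H C : {set gT}) : Prop :=
  [/\ C \subset A,
      (forall x y, x \in C -> y \in C -> ~~ ssg_adj H x y) &
      (forall x, x \in A :\: C -> #|[set c in C | ssg_adj H x c]| = 1%N)].

Definition admits_perfect_code (gT : finGroupType) (A H : {set gT}) : Prop :=
  exists C : {set gT}, perfect_code A H C.

(* Main.v *)
Require Import Defs.
From mathcomp Require Import all_boot all_fingroup all_solvable.
Local Open Scope group_scope.

Lemma commA (gT : finGroupType) (A : {set gT}) :
  abelian A -> forall a b, a \in A -> b \in A -> commute a b.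
Proof. move=> cA a b aA bA; exact: (centsP cA) a aA b bA. Qed.

Lemma three_le2 (T : finType) (S : {set T}) a b c :
  (#|S| <= 2)%N -> a \in S -> b \in S -> c \in S -> a != b -> a != c -> b != c -> False.
Proof.
move=> hS aS bS cS ab ac bc.
have sub: [set a; b; c] \subset S by apply/subsetP=> y; rewrite !inE => /orP[/orP[]|] /eqP->.
have := subset_leq_card sub.
have -> : [set a; b; c] = a |: [set b; c] by rewrite setUA.
rewrite cardsU1 cards2 bc !inE negb_or ab ac /=.
by move=> h; have := leq_trans h hS.
Qed.

Lemma necess (gT : finGroupType) (A H : {group gT}) (C : {set gT}) x :
  abelian A -> H \subset A -> perfect_code A H C -> (2 < #|H|)%N ->
  x \in A -> x ^+ 2 \in H -> exists2 h, h \in H & (x * h) ^+ 2 = 1.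
Proof.
move=> cA sHA [sCA indep dom] H2 xA x2H.
have comm := @commA _ A cA.
have hA : forall h, h \in H -> h \in A by move=> h; apply/subsetP.
have [c cC cxH]: exists2 c, c \in C & x^-1 * c \in H.
  case: (boolP (x \in C)) => xC.
    by exists x => //; rewrite mulVg group1.
  have := dom x; rewrite inE xC xA => /(_ isT) /eqP/cards1P [c Hc].
  have: c \in [set c0 in C | ssg_adj H x c0] by rewrite Hc set11.
  rewrite inE /ssg_adj => /andP[cC /andP[_ ]]; rewrite !inE => /andP[_ xcH].
  exists c => //.
  have ->: x^-1 * c = (x^+2)^-1 * (x*c) by rewrite expgS expg1 invMg -mulgA mulKg.
  by rewrite groupM // groupV.
have cA' : c \in A by apply/(subsetP sCA).
have c2H : c ^+ 2 \in H.
  have kH : x^-1 * c \in H := cxH.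
  have ->: c = x * (x^-1*c) by rewrite mulKVg.
  rewrite expgMn; first by rewrite groupM // groupX.
  by apply: comm => //; apply: hA.
case: (eqVneq (c ^+ 2) 1) => c2.
  by exists (x^-1 * c) => //; rewrite mulKVg.
have cVc : c^-1 != c.
  apply: contra_neq c2 => e; by rewrite expgS expg1 -{1}e mulVg.
have cVA : c^-1 \in A by rewrite groupV.
case: (boolP (c^-1 \in C)) => cVC.
  have: ~~ (H \subset [set 1; (c^+2)^-1]).
    apply/negP => /subset_leq_card; rewrite cards2 => h.
    have h' : (1 != c ^- 2).+1 <= 2 by case: (_ != _).
    by have := leq_trans H2 (leq_trans h h'); rewrite ltnn.
  case/subsetPn => h hH; rewrite !inE negb_or => /andP[h1 h2].
  have hA' := hA h hH.
  pose w := c * h.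
  have wA : w \in A by rewrite groupM.
  have wc : w * c = c ^+ 2 * h by rewrite /w -mulgA (comm h c) // mulgA expgS expg1.
  have wc1 : w * c != 1.
    by rewrite wc -eq_invg_mul eq_sym.
  have adj1 : ssg_adj H w c.
    rewrite /ssg_adj !inE wc1 wc groupM // andbT.
    rewrite andbT; move: h1; apply: contra_neq => e.
    by rewrite -(mulKg c h) -/w e mulVg.
  have wcV : w * c^-1 = h by rewrite /w -mulgA (comm h c^-1) // mulKVg.
  have adj2 : ssg_adj H w c^-1.
    rewrite /ssg_adj !inE wcV h1 hH andbT.
    rewrite andbT; move: wc1; apply: contra_neq => ->; by rewrite mulVg.
  have wC : w \notin C by apply/negP => wC; have := indep _ _ wC cC; rewrite adj1.
  have := dom w; rewrite inE wC wA => /(_ isT) => e.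
  have : [set c; c^-1] \subset [set c0 in C | ssg_adj H w c0].
    by apply/subsetP => y; rewrite !inE => /orP[]/eqP->; rewrite ?cC ?cVC ?adj1 ?adj2.
  move/subset_leq_card; rewrite e cards2 eq_sym cVc; done.
have := dom c^-1; rewrite inE cVC cVA => /(_ isT) /eqP/cards1P [d Hd].
have: d \in [set c0 in C | ssg_adj H c^-1 c0] by rewrite Hd set11.
rewrite inE /ssg_adj => /andP[dC /andP[cd ]]; rewrite !inE => /andP[cd1 cdH].
have dA : d \in A by apply/(subsetP sCA).
have := indep _ _ dC cC; rewrite /ssg_adj !inE.
have -> : d != c by apply: contra cd1 => /eqP ->; rewrite mulVg.
have -> : d * c != 1 by rewrite -{1}(invgK c) -eq_mulgV1 eq_sym.
have -> : d * c = (c^-1 * d) * c ^+ 2.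
  by rewrite (comm c^-1 d) // expgS expg1 mulgA mulgKV.
by rewrite groupM.
Qed.

Definition pickf (gT : finGroupType) (S : {set gT}) : gT :=
  if [pick y in S | y ^+ 2 == 1] is Some y then y else odflt 1 [pick y in S].

Definition UU (gT : finGroupType) (K : {set gT}) (x : gT) := x *: K :|: x^-1 *: K.
Arguments pickf {gT} S.
Arguments UU {gT} K x.

Lemma pickf_in (gT : finGroupType) (S : {set gT}) : S != set0 -> pickf S \in S.
Proof.
move=> nS; rewrite /pickf; case: pickP => [y /andP[]//|_].
case: pickP => [y //|/= S0]; case/set0Pn: nS => y yS; by have:= S0 y; rewrite yS.
Qed.

Lemma pickf_inv (gT : finGroupType) (S : {set gT}) y :
  y \in S -> y ^+ 2 = 1 -> pickf S ^+ 2 = 1.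
Proof.
move=> yS e; rewrite /pickf; case: pickP => [z /andP[_ /eqP]//| H0].
by have:= H0 y; rewrite yS e eqxx.
Qed.

Lemma UU_x (gT : finGroupType) (K : {group gT}) x : x \in UU K x.
Proof. by rewrite !inE mem_lcoset mulVg group1. Qed.

Lemma UU_eq (gT : finGroupType) (B K : {group gT}) x z :
  abelian B -> K \subset B -> x \in B -> z \in UU K x -> UU K z = UU K x.
Proof.
move=> cB sKB xB; have comm := @commA _ B cB.
have kB : forall k, k \in K -> k \in B by move=> k; apply/subsetP.
rewrite !inE !mem_lcoset invgK => /orP[] zK.
  have zB : z \in B by rewrite -(mulKVg x z) groupM // kB.
  rewrite /UU (lcoset_eqP (_ : z \in x *: K)) ?mem_lcoset //.
  rewrite (lcoset_eqP (_ : z^-1 \in x^-1 *: K)) // mem_lcoset invgK.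
  by rewrite -groupV invMg invgK (comm z x^-1) ?groupV.
have zB : z \in B by rewrite -(mulKg x z) groupM ?groupV // kB.
rewrite /UU setUC (lcoset_eqP (_ : z \in x^-1 *: K)) ?mem_lcoset ?invgK //.
rewrite (lcoset_eqP (_ : z^-1 \in x *: K)) // mem_lcoset.
by rewrite -invMg (comm z x) // groupV.
Qed.

Lemma suff (gT : finGroupType) (B K : {group gT}) :
  abelian B -> K \subset B ->
  ((#|K| <= 2)%N \/ forall u, u \in B -> u ^+ 2 \in K -> exists2 h, h \in K & (u * h) ^+ 2 = 1) ->
  admits_perfect_code B K.
Proof.
move=> cB sKB hQ; have comm := @commA _ B cB.
have kB : forall k, k \in K -> k \in B by move=> k; apply/subsetP.
pose g x := pickf (UU K x).
have gU : forall x, g x \in UU K x.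
  by move=> x; apply: pickf_in; apply/set0Pn; exists x; apply: UU_x.
have gB : forall x, x \in B -> g x \in B.
  move=> x xB; have := gU x; rewrite !inE !mem_lcoset invgK => /orP[] h.
    by rewrite -(mulKVg x (g x)) groupM // kB.
  by rewrite -(mulKg x (g x)) groupM ?groupV // kB.
have gE : forall x z, x \in B -> x * z \in K -> g z = g x.
  move=> x z xB xzK; rewrite /g (@UU_eq _ B K x z cB sKB xB) //.
  by rewrite !inE !mem_lcoset invgK xzK orbT.
exists [set y in B | (g y == y) || (g y == y^-1)]; split.
- by apply/subsetP => y; rewrite inE => /andP[].
- move=> x y; rewrite !inE => /andP[xB gx] /andP[yB gy].
  rewrite /ssg_adj !inE; apply/negP => /andP[xy /andP[xy1 xyK]].
  move: gy; rewrite (gE x y xB xyK).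
  case/orP: gx => /eqP ->; case/orP => /eqP e; move: xy xy1; first [ by rewrite e eqxx | by rewrite -e mulVg eqxx
             | by rewrite e mulVg eqxx | by rewrite -e mulgV eqxx
             | by move/invg_inj: e => ->; rewrite eqxx ].
move=> x; rewrite inE => /andP[xnC xB]; move: xnC; rewrite inE xB /= negb_or.
case/andP=> ux uxV.
set u := g x in ux uxV *.
have uB : u \in B := gB x xB.
have uU : u \in UU K x := gU x.
have key : [set c in [set y in B | (g y == y) || (g y == y^-1)] | ssg_adj K x c]
    = [set c | ((c == u) || (c == u^-1)) && (x * c \in K)].
  apply/setP => c; rewrite !inE /ssg_adj !inE.
  case: (boolP (x * c \in K)) => xcK; last by rewrite !andbF.
  rewrite !andbT (gE x c xB xcK) -/u.
  have cBB : c \in B by rewrite -(mulKg x c) groupM ?groupV // kB.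
  rewrite cBB /= (eq_sym u c) -eqg_invLR (eq_sym _ c).
  case: (eqVneq c u) => [->|cu] /=.
    by rewrite eq_sym ux /= -eq_invg_mul eq_sym.
  case: (eqVneq c u^-1) => [->|] //=.
  by rewrite -eqg_invLR eq_sym uxV /= -eq_mulgV1 eq_sym.
rewrite key.
have hU : (x^-1 * u \in K) || (x * u \in K).
  by move: uU; rewrite !inE !mem_lcoset invgK.
have eb : (x * u^-1 \in K) = (x^-1 * u \in K).
  by rewrite -groupV invMg invgK (comm u x^-1) ?groupV.
case: (eqVneq (u ^+ 2) 1) => u2.
  have uV : u^-1 = u by rewrite -[u^-1]mulg1 -u2 expgS expg1 mulKg.
  have xuK : x * u \in K by case/orP: hU => //; rewrite -eb uV.
  rewrite (_ : [set c | _] = [set u]) ?cards1 //; apply/setP => c.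
  rewrite !inE uV orbb; case: (eqVneq c u) => [->|] //=.
have notboth : ~~ ((x * u \in K) && (x * u^-1 \in K)).
  apply/negP => /andP[a b].
  have u2K : u ^+ 2 \in K.
    have ->: u ^+ 2 = (x * u^-1)^-1 * (x * u) by rewrite invMg invgK -mulgA mulKg expgS expg1.
    by rewrite groupM ?groupV.
  case: hQ => [K2|hall].
    have : x \in UU K u by rewrite (@UU_eq _ B K x u cB sKB xB uU) UU_x.
    rewrite !inE !mem_lcoset invgK => /orP[] h.
      apply: (@three_le2 _ K _ _ _ K2 (group1 K) h (groupVr u2K)).
      - by rewrite eq_sym -eq_invg_mul invgK.
      - by rewrite eq_sym invg_eq1.
      - apply/negP => /eqP e; move/negP: uxV; apply.
        by rewrite -(mulKVg u x) e expgS expg1 invMg invgK mulgK.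
    apply: (@three_le2 _ K _ _ _ K2 (group1 K) h u2K).
    - by rewrite eq_sym -eq_invg_mul eqg_invLR.
    - by rewrite eq_sym.
    - apply/negP => /eqP e; move/negP: ux; apply.
      by rewrite -(mulKg u x) e expgS expg1 mulKg.
  have [h hK e] := hall u uB u2K.
  have : u * h \in UU K x.
    by rewrite -(@UU_eq _ B K x u cB sKB xB uU) !inE mem_lcoset mulKg hK.
  move=> uhU; move/eqP: u2; apply; exact: (@pickf_inv _ _ _ uhU e).
have uuV : (u == u^-1) = false.
  apply/negbTE; apply: contra u2 => /eqP e; by rewrite expgS expg1 {1}e mulVg.
case/orP: hU => h.
  rewrite -eb in h; move: notboth; rewrite h andbT => xuK.
  rewrite (_ : [set c | _] = [set u^-1]) ?cards1 //; apply/setP => c.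
  rewrite !inE; case: (eqVneq c u) => [->|cu] /=.
    by rewrite uuV (negbTE xuK).
  by case: (eqVneq c u^-1) => [->|] //=; rewrite h.
move: notboth; rewrite h /= => xuK.
rewrite (_ : [set c | _] = [set u]) ?cards1 //; apply/setP => c.
rewrite !inE; case: (eqVneq c u) => [->|cu] /=; first by rewrite h.
by case: (eqVneq c u^-1) => [->|] //=; rewrite (negbTE xuK).
Qed.

Theorem proposition3p4 (gT : finGroupType) (A H A2 H2 : {group gT}) :
  abelian A -> H \subset A ->
  A2 \in 'Syl_2(A) -> H2 \in 'Syl_2(H) ->
  admits_perfect_code A H -> admits_perfect_code A2 H2.
Proof.
move=> cA sHA; rewrite !inE => hA2 hH2 [C pc].
have sA2A : A2 \subset A := pHall_sub hA2.
have sH2H : H2 \subset H := pHall_sub hH2.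
have nA2 : A2 <| A by rewrite -sub_abelian_normal.
have cH : abelian H := abelianS sHA cA.
have nH2 : H2 <| H by rewrite -sub_abelian_normal.
have cA2 : abelian A2 := abelianS sA2A cA.
have sH2A2 : H2 \subset A2.
  apply/subsetP => y yH2.
  have yH : y \in H := subsetP sH2H y yH2.
  rewrite (mem_normal_Hall hA2 nA2) ?(subsetP sHA) //.
  exact: mem_p_elt (pHall_pgroup hH2) yH2.
apply: (@suff _ A2 H2 cA2 sH2A2).
case: (leqP #|H2| 2) => [l|gt]; [left => // | right].
move=> u uA2 u2H2.
have uA : u \in A := subsetP sA2A u uA2.
have u2H : u ^+ 2 \in H := subsetP sH2H _ u2H2.
have H3 : (2 < #|H|)%N := leq_trans gt (subset_leq_card sH2H).
have [h hH e] := @necess _ A H C u cA sHA pc H3 uA u2H.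
have hA : h \in A := subsetP sHA h hH.
have uhA2 : u * h \in A2.
  rewrite (mem_normal_Hall hA2 nA2) ?groupM //.
  rewrite /p_elt; apply: (pnat_dvd _ (pnat_id (isT : prime 2))).
  by rewrite order_dvdn e.
have hA2' : h \in A2 by rewrite -(mulKg u h) groupM ?groupV.
exists h => //.
rewrite (mem_normal_Hall hH2 nH2 hH).
exact: mem_p_elt (pHall_pgroup hA2) hA2'.
Qed.
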